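(* Let $G$ be a finite simple graph, let $V_1\subset V(G)$ and $V_2=V(G)\setminus V_1$ with both nonempty, and let $G_1=G(V_1)$, $G_2=G(V_2)$, $V=V(G)$. Let $k$ be a positive integer and assume: (i) $\deg_G(x)\ge k$ for all $x\in V(G)$; (ii) $G_2$ is $k$-edge-connected; (iii) $\max_{x,y\in V}\delta(x,y)\le 2$. If at least one of the following holds: (a) $\Phi\ge k$; (b) $|\partial^1 V_1|\ge k$; (c) $V_1=\partial^1 V_1$; then $G$ is $k$-edge-connected.
   Context: For $A,B\subset V(G)$, $[A,B]$ denotes the set of edges $ab$ of $G$ with $a\in A$, $b\in B$; $[v,A]$ means $[\{v\},A]$. $\deg_G(v)=|[v,V(G)]|$. $G(A)$ is the induced subgraph on $A$. $d_G$ is graph distance and $d_G(v,A)=\min_{w\in A}d_G(v,w)$. A graph is $k$-edge-connected if every edge cut $[S,\bar S]$ ($\emptyset\ne S\subsetneq V$, $\bar S=V\setminus S$) has at least $k$ edges. Contracted distance: for $x,y\in V_1$, $\delta(x,y)=\min\{d_{G_1}(x,y),\, d_G(x,V_2)+d_G(y,V_2)\}$; for $x\in V$ and $y\in V_2$, $\delta(x,y)=\delta(y,x)=d_G(x,V_2)$. For $j\ge1$: $\partial^j V_1=\{x\in V_1: |[x,V_2]|\ge j\}$ and $i^j V_1=\{x\in V_1: |[x,V_2]|<j\}$. $\Phi=\sum_{x\in V_1}\min\{\max\{1,|[x,i^2V_1]|\},\,|[x,V_2]|\}$. *)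

(* Defs.v *)
(* A finite simple graph is a symmetric irreflexive
   relation e on a finType T (vertex set = all of T). *)
From mathcomp Require Import all_boot.
Set Implicit Arguments. Unset Strict Implicit. Unset Printing Implicit Defensive.

Section Graph.
Variables (T : finType) (e : rel T).

Definition simple_graph : Prop := irreflexive e /\ symmetric e.

(* |[A,B]| : number of edges ab with a in A, b in B (each edge is an
   ordered pair (a,b) with a \in A, b \in B; for disjoint A, B this counts
   each edge exactly once). *)
Definition ecount (A B : {set T}) : nat :=
  #|[set p : T * T | (p.1 \in A) && (p.2 \in B) && e p.1 p.2]|.

Definition vcount (v : T) (A : {set T}) : nat := ecount [set v] A.

Definition deg (v : T) : nat := vcount v [set: T].

(* The induced subgraph G(W) is k-edge-connected: every edge cut
   [S, W \ S] with S nonempty, proper in W, has at least k edges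
   (edges of G(W) between S and W\S are exactly the edges of G
   between them). *)
Definition kedge_conn_on (k : nat) (W : {set T}) : Prop :=
  forall S : {set T}, S \subset W -> S != set0 -> S != W ->
    k <= ecount S (W :\: S).

(* Walks in the induced subgraph G(W): within W x y n  <->  there is a
   walk of length at most n from x to y using only vertices of W,
   i.e.  d_{G(W)}(x,y) <= n  (for x, y in W). *)
Fixpoint within (W : {set T}) (n : nat) (x y : T) : bool :=
  match n with
  | 0 => (x == y) && (x \in W)
  | n'.+1 => within W n' x y ||
             [exists z, within W n' x z && (y \in W) && e z y]
  end.

Definition dist_le (W : {set T}) (x y : T) (n : nat) : bool := within W n x y.

Definition setdist_le (x : T) (A : {set T}) (n : nat) : bool :=
  [exists w in A, dist_le [set: T] x w n].

(* Contracted distance bounds, with V2 = ~: V1: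
   for x,y in V1: delta(x,y) = min{ d_{G1}(x,y), d_G(x,V2)+d_G(y,V2) } <= n;
   for x in V, y in V2: delta(x,y) = d_G(x,V2) <= n. *)
Definition delta_le (V1 : {set T}) (x y : T) (n : nat) : Prop :=
  if (x \in V1) && (y \in V1) then
    dist_le V1 x y n \/
    exists a b, a + b <= n /\ setdist_le x (~: V1) a /\ setdist_le y (~: V1) b
  else if y \in ~: V1 then setdist_le x (~: V1) n
  else setdist_le y (~: V1) n.

Definition bdry (V1 : {set T}) (j : nat) : {set T} :=
  [set x in V1 | j <= vcount x (~: V1)].
Definition inter (V1 : {set T}) (j : nat) : {set T} :=
  [set x in V1 | vcount x (~: V1) < j].

Definition Phi (V1 : {set T}) : nat :=
  \sum_(x in V1) minn (maxn 1 (vcount x (inter V1 2))) (vcount x (~: V1)).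

End Graph.

(* Main.v *)
Require Import Defs.
From mathcomp Require Import all_boot.
From Stdlib Require Import Lia.
Set Implicit Arguments. Unset Strict Implicit. Unset Printing Implicit Defensive.

Definition nb (T : finType) (e : rel T) (x : T) (B : {set T}) : nat :=
  \sum_(y in B) (e x y : nat).

Lemma ecount_sum (T : finType) (e : rel T) (A B : {set T}) :
  ecount e A B = \sum_(x in A) nb e x B.
Proof.
rewrite /ecount -sum1_card /nb.
rewrite (pair_big_dep (fun x => x \in A) (fun _ y => y \in B) (fun x y => (e x y : nat))) /=.
rewrite big_mkcond [RHS]big_mkcond /=; apply: eq_bigr => p _; rewrite inE.
by case: (p.1 \in A); case: (p.2 \in B); case: (e p.1 p.2).
Qed.

Lemma vcount_nb (T : finType) (e : rel T) x B : vcount e x B = nb e x B.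
Proof. by rewrite /vcount ecount_sum big_set1. Qed.

Lemma nbU (T : finType) (e : rel T) x (B C : {set T}) :
  [disjoint B & C] -> nb e x (B :|: C) = nb e x B + nb e x C.
Proof. by move=> d; rewrite /nb -bigU //=; apply: eq_bigl => y; rewrite !inE. Qed.

Lemma nb_pos (T : finType) (e : rel T) x y (B : {set T}) :
  y \in B -> e x y -> 0 < nb e x B.
Proof. by move=> yB exy; rewrite /nb (bigD1 y) //= exy. Qed.

Lemma nb_irr (T : finType) (e : rel T) x (S : {set T}) :
  irreflexive e -> x \in S -> nb e x S + 1 <= #|S|.
Proof.
move=> irr xS; rewrite /nb -sum1_card (bigD1 x) //= irr (bigD1 x xS) /= add0n addnC leq_add2l.
by apply: leq_sum => y _; apply: leq_b1.
Qed.

Lemma ecount_sym (T : finType) (e : rel T) (A B : {set T}) :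
  symmetric e -> ecount e A B = ecount e B A.
Proof.
move=> sy; rewrite !ecount_sum /nb exchange_big /=; apply: eq_bigr => y _.
by apply: eq_bigr => x _; rewrite sy.
Qed.

Lemma card_sep (T : finType) (A : {set T}) (P : pred T) :
  #|[set x in A | P x]| = \sum_(x in A) (P x : nat).
Proof.
rewrite -sum1_card [RHS]big_mkcond [LHS]big_mkcond; apply: eq_bigr => x _.
by rewrite inE; case: (x \in A); case: (P x).
Qed.

Lemma within0 (T : finType) (e : rel T) W x y : within e W 0 x y -> x = y.
Proof. by move=> /= /andP[/eqP]. Qed.

Lemma within1 (T : finType) (e : rel T) W x y : within e W 1 x y -> x = y \/ e x y.
Proof.
move=> /= /orP[/within0 -> | /existsP[z /andP[/andP[/andP[/eqP -> _] _] ezy]]]; by auto.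
Qed.

Lemma within2 (T : finType) (e : rel T) W x y : within e W 2 x y ->
  [\/ x = y, e x y | exists z, e x z /\ e z y].
Proof.
move=> /orP[/within1 [->|h] | /existsP[z /andP[/andP[/within1 h _] ezy]]].
- by constructor 1.
- by constructor 2.
case: h => [exz|exz]; first by constructor 2; rewrite exz.
by constructor 3; exists z.
Qed.

Lemma withinle1 (T : finType) (e : rel T) W n x y : n <= 1 -> within e W n x y -> x = y \/ e x y.
Proof. by case: n => [_ /within0 ->|[_ /within1 //|]]; auto. Qed.

Lemma ar1 k a b s : k <= a + b -> a + 1 <= s -> k + 1 - s <= b.
Proof. move=> /leP h1 /leP h2; apply/leP; rewrite -?multE -?minusE -?plusE in h1 h2 *; lia. Qed.
Lemma ar2 k s : 0 < s -> s < k -> k <= s * (k + 1 - s).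
Proof. move=> /ltP h1 /ltP h2; apply/leP; rewrite -?multE -?minusE -?plusE; nia. Qed.

Lemma deg_split (T : finType) (e : rel T) x (S : {set T}) :
  deg e x = nb e x S + nb e x (~: S).
Proof.
by rewrite /deg vcount_nb -nbU ?setUCr // disjoints_subset setCK.
Qed.

Lemma lemA (T : finType) (e : rel T) (S : {set T}) k :
  irreflexive e -> S != set0 -> (forall x, k <= deg e x) ->
  (forall x, x \in S -> 0 < nb e x (~: S)) ->
  k <= \sum_(x in S) nb e x (~: S).
Proof.
move=> irr /set0Pn[x0 x0S] hdeg hpos.
have s0 : 0 < #|S| by apply/card_gt0P; exists x0.
case: (leqP k #|S|) => hk.
  apply: (leq_trans hk); rewrite -sum1_card; apply: leq_sum => x /hpos //.
apply: (leq_trans (ar2 s0 hk)); rewrite -sum_nat_const; apply: leq_sum => x xS.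
apply: (ar1 (a := nb e x S)); first by rewrite -deg_split.
exact: nb_irr.
Qed.

Lemma split_set (T : finType) (S V : {set T}) : S \subset V ->
  V = S :|: (V :\: S) /\ [disjoint S & V :\: S].
Proof.
move=> sSV; split.
  by apply/setP => y; rewrite !inE; case: (boolP (y \in S)) => //= /(subsetP sSV) ->.
by rewrite disjoints_subset; apply/subsetP => y; rewrite !inE => ->.
Qed.

Lemma nb_sub (T : finType) (e : rel T) x (B C : {set T}) :
  B \subset C -> nb e x B <= nb e x C.
Proof.
move=> /split_set [h d]; by rewrite h nbU // leq_addr.
Qed.

Lemma lemB (T : finType) (A : {set T}) (f : T -> nat) b :
  b \in A -> (forall t, t \in A -> 0 < f t) -> f b + #|A| <= \sum_(t in A) f t + 1.
Proof.
move=> bA hp; rewrite -sum1_card !(bigD1 b bA) /= addnA addnC addnA leq_add2r addnC leq_add2l.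
by apply: leq_sum => t /andP[tA _]; apply: hp.
Qed.

Lemma sumU (T : finType) (S V : {set T}) (f : T -> nat) : S \subset V ->
  \sum_(x in V) f x = \sum_(x in S) f x + \sum_(x in V :\: S) f x.
Proof.
move=> /split_set [h d]; rewrite -bigU //=; apply: eq_bigl => y.
by rewrite {1}h !inE.
Qed.

Lemma mainS (T : finType) (e : rel T) (V1 S : {set T}) (k : nat) :
  simple_graph e -> ~: V1 != set0 ->
  (forall x : T, k <= deg e x) ->
  (forall x y : T, delta_le e V1 x y 2) ->
  (k <= Phi e V1 \/ k <= #|bdry e V1 1| \/ V1 = bdry e V1 1) ->
  S \subset V1 -> S != set0 -> k <= ecount e S (~: S).
Proof.
move=> [irr sym] /set0Pn[w0 w0V2] hdeg hdel hcond sSV1 Sn0.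
rewrite ecount_sum.
case: (boolP [forall x in S, 0 < nb e x (~:S)]) => [/forall_inP h | /forall_inPn [x0 x0S hx0]].
  exact: lemA.
have nx0 : forall y, e x0 y -> y \in S.
  move=> y exy; case: (boolP (y \in S)) => // yS; exfalso.
  by move/negP: hx0; apply; apply: (nb_pos (y := y)); rewrite ?inE.
have x0V1 : x0 \in V1 := subsetP sSV1 _ x0S.
set T' := V1 :\: S.
have hC : ~: S = ~: V1 :|: T'.
  apply/setP => y; rewrite !inE; case: (boolP (y \in S)) => yS /=.
    by rewrite (subsetP sSV1 _ yS).
  by case: (y \in V1).
have dC : [disjoint ~: V1 & T'].
  by rewrite disjoints_subset; apply/subsetP => y; rewrite !inE => /negbTE ->; rewrite andbF.
have hc : \sum_(x in S) nb e x (~: S) =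
    \sum_(x in S) nb e x (~: V1) + \sum_(t in T') nb e t S.
  rewrite -!ecount_sum (ecount_sym T' S sym) !ecount_sum -big_split /=.
  by apply: eq_bigr => x _; rewrite hC nbU.
have F1 : 0 < \sum_(x in S) nb e x (~: V1).
  have := hdel x0 w0; rewrite /delta_le x0V1 /=.
  move: (w0V2); rewrite inE => /negbTE -> /=.
  move=> /existsP [w /andP [wV2 hw]]; move: hw; rewrite /dist_le => /within2 [ex|exw|[z [exz ezw]]].
  - by move: wV2; rewrite -ex inE x0V1.
  - by move: wV2; rewrite inE (subsetP sSV1 _ (nx0 _ exw)).
  - rewrite (bigD1 z (nx0 _ exz)) /=; apply: leq_trans (leq_addr _ _).
    exact: (nb_pos wV2 ezw).
have F2 : forall t, t \in T' -> 0 < nb e t S.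
  move=> t; rewrite inE => /andP [tS tV1].
  have := hdel x0 t; rewrite /delta_le x0V1 tV1 /=.
  case => [hw | [a [b [hab [ha hb]]]]].
    move: hw; rewrite /dist_le => /within2 [ex|ext|[z [exz ezt]]].
    - by move: tS; rewrite -ex x0S.
    - by move: tS; rewrite (nx0 _ ext).
    - by apply: (nb_pos (nx0 _ exz)); rewrite sym.
  case: (leqP a 1) => ha1.
    move: ha => /existsP [w /andP [wV2 /(withinle1 ha1) [ex|exw]]].
    - by move: wV2; rewrite -ex inE x0V1.
    - by move: wV2; rewrite inE (subsetP sSV1 _ (nx0 _ exw)).
  have b0 : b = 0 by apply/eqP; rewrite -leqn0 -(leq_add2l a); apply: (leq_trans hab); rewrite addn0.
  move: hb; rewrite b0 => /existsP [w /andP [wV2 /(@within0 _ e) ex]].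
  by move: wV2; rewrite -ex inE tV1.
rewrite hc.
case: hcond => [hPhi | [hb | hc2]]; last first.
- move: x0V1; rewrite {1}hc2 inE vcount_nb => /andP [_ h1].
  by move: hx0; rewrite hC nbU // -lt0n; case: (nb e x0 (~: V1)) h1.
- apply: (leq_trans hb); rewrite /bdry card_sep (sumU _ sSV1); apply: leq_add.
    by apply: leq_sum => x _; rewrite vcount_nb; case: (nb e x (~: V1)).
  by apply: leq_sum => t tT; apply: leq_trans (F2 _ tT); apply: leq_b1.
case: (boolP [exists b in T', b \in inter e V1 2]) => [/existsP [b /andP [bT bi]] | /existsPn nob].
  have := hdeg b; rewrite (deg_split e b S) hC nbU //.
  move: bi; rewrite inE vcount_nb => /andP [_ hb2].
  have := nb_irr (e := e) irr bT.
  have := lemB bT F2.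
  move: F1 hb2; set A := \sum_(x in S) _; set B := \sum_(t in T') _.
  move=> /leP h1 /leP h2 /leP h3 /leP h4 /leP h5; apply/leP.
  rewrite -?plusE in h1 h2 h3 h4 h5 |- *; lia.
apply: (leq_trans hPhi); rewrite /Phi (sumU _ sSV1); apply: leq_add.
  by apply: leq_sum => x _; rewrite !vcount_nb geq_minr.
apply: leq_sum => t tT; apply: leq_trans (geq_minl _ _) _.
rewrite geq_max (F2 _ tT) /= vcount_nb; apply: nb_sub; apply/subsetP => y yi.
have := nob y; rewrite yi andbT; move: yi; rewrite !inE => /andP [yV1 _].
by rewrite yV1 andbT negbK.
Qed.

Lemma ecount_mono (T : finType) (e : rel T) (A A' B B' : {set T}) :
  A \subset A' -> B \subset B' -> ecount e A B <= ecount e A' B'.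
Proof.
move=> sA sB; rewrite !ecount_sum (sumU _ sA); apply: leq_trans (leq_addr _ _).
by apply: leq_sum => x _; apply: nb_sub.
Qed.

Theorem corollary1 (T : finType) (e : rel T) (V1 : {set T}) (k : nat) :
  simple_graph e ->
  V1 != set0 -> ~: V1 != set0 ->
  0 < k ->
  (forall x : T, k <= deg e x) ->
  kedge_conn_on e k (~: V1) ->
  (forall x y : T, delta_le e V1 x y 2) ->
  (k <= Phi e V1 \/ k <= #|bdry e V1 1| \/ V1 = bdry e V1 1) ->
  kedge_conn_on e k [set: T].
Proof.
move=> sg V1n0 V2n0 k0 hdeg hG2 hdel hcond S _ Sn0 SnT.
rewrite setTD.
case: (boolP (S :&: ~: V1 == set0)) => [/eqP hI | hI].
  apply: (mainS sg V2n0 hdeg hdel hcond) => //.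
  apply/subsetP => x xS; apply/negPn/negP => xV.
  by move: (in_set0 x); rewrite -hI inE xS inE xV.
case: (boolP (~: V1 \subset S)) => hsub.
  have sub' : ~: S \subset V1 by rewrite -(setCK V1) setCS.
  have n0 : ~: S != set0.
    apply: contra SnT => /eqP h; apply/eqP; by rewrite -(setCK S) h setC0.
  have := mainS sg V2n0 hdeg hdel hcond sub' n0.
  by rewrite setCK ecount_sym //; case: sg.
apply: (leq_trans (hG2 (S :&: ~: V1) (subsetIr _ _) hI _)).
  apply: contra hsub => /eqP h; by rewrite -h subsetIl.
apply: ecount_mono; first exact: subsetIl.
apply/subsetP => x; rewrite !inE => /andP [h1 h2]; move: h1.
by rewrite h2 andbT.
Qed.
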